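(* Let $\mathbb{F}\in\{\mathbb{R},\mathbb{C}\}$, $\boldsymbol A\in\mathbb{F}^{m\times n}$, $k\in\{1,\dots,n\}$, and suppose there exist a map $\Delta:\mathbb{R}^m\to\mathbb{F}^n$ and $c_0>0$ with $\mathrm{dist}(\Delta(|\boldsymbol A\boldsymbol x|),\boldsymbol x)\le c_0\,\sigma_k(\boldsymbol x)_2$ for all $\boldsymbol x\in\mathbb{F}^n$. Then for every $\boldsymbol\eta\in\mathbb{F}^n$ with $\boldsymbol A\boldsymbol\eta=\boldsymbol 0$ and every $T\subset\{1,\dots,n\}$ with $\#T\le 2k$, \[ \|\boldsymbol\eta\|_2\le c_0\,\sigma_{2k}(\boldsymbol\eta)_2\le c_0\,\|\boldsymbol\eta_{T^c}\|_2 . \]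
   Context: $|\boldsymbol u|$ is the entrywise modulus. $\mathrm{dist}(\boldsymbol x,\boldsymbol y)=\min_{c\in\mathbb F,|c|=1}\|\boldsymbol x-c\boldsymbol y\|_2$. $\Sigma_s=\{\boldsymbol z\in\mathbb F^n:\|\boldsymbol z\|_0\le s\}$, $\sigma_s(\boldsymbol x)_2=\min_{\boldsymbol z\in\Sigma_s}\mathrm{dist}(\boldsymbol x,\boldsymbol z)$. For $T\subset\{1,\dots,n\}$, $\boldsymbol\eta_{T}$ is the vector agreeing with $\boldsymbol\eta$ on $T$ and zero elsewhere, and $T^c$ is the complement of $T$. *)

(* Defs.v *)
From HB Require Import structures.
From mathcomp Require Import all_boot all_order all_algebra.
From mathcomp Require Import boolp classical_sets reals.
From mathcomp Require Import complex.
Set Implicit Arguments. Unset Strict Implicit. Unset Printing Implicit Defensive.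
Import Order.TTheory GRing.Theory Num.Theory.
Local Open Scope ring_scope.

Section Defs.
(* R: the reals; F: the scalar field (R or R[i]); md : F -> R its modulus. *)
Variables (R : realType) (F : pzRingType) (md : F -> R).

Definition absv m (u : 'cV[F]_m) : 'cV[R]_m := \col_i md (u i 0).

Definition norm2 n (x : 'cV[F]_n) : R := Num.sqrt (\sum_i md (x i 0) ^+ 2).

(* dist(x,y) = min_{|c|=1} ||x - c y||_2  (the minimum is attained; we use inf) *)
Definition dist n (x y : 'cV[F]_n) : R :=
  inf [set norm2 (x - c *: y) | c in [set c : F | md c = 1]]%classic.

Definition norm0 n (z : 'cV[F]_n) : nat := #|[set i | z i 0 != 0]|.

Definition sigma n (s : nat) (x : 'cV[F]_n) : R :=
  inf [set dist x z | z in [set z : 'cV[F]_n | (norm0 z <= s)%N]]%classic.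

Definition restr n (T : {set 'I_n}) (eta : 'cV[F]_n) : 'cV[F]_n :=
  \col_i (if i \in T then eta i 0 else 0).
End Defs.

(* Main.v *)
Require Import Defs.
From HB Require Import structures.
From mathcomp Require Import all_boot all_order all_algebra.
From mathcomp Require Import boolp classical_sets reals.
From mathcomp Require Import complex.
From mathcomp Require Import ring lra zify.
Import Order.TTheory GRing.Theory Num.Theory.
Set Implicit Arguments. Unset Strict Implicit. Unset Printing Implicit Defensive.
Local Open Scope ring_scope.

Section Real.
Variable R : realType.

Definition nr n (a : 'I_n -> R) : R := Num.sqrt (\sum_i a i ^+ 2).

Lemma nr_le n (a b : 'I_n -> R) : (forall i, 0 <= a i) -> (forall i, a i <= b i) ->
  nr a <= nr b.
Proof.
move=> a0 ab; rewrite /nr ler_sqrt; last by apply: sumr_ge0 => i _; exact: sqr_ge0.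
apply: ler_sum => i _; rewrite !expr2; apply: ler_pM => //; exact: a0.
Qed.

Lemma sum0_sq n (a : 'I_n -> R) : Num.sqrt (\sum_i a i ^+ 2) = 0 -> forall i, a i = 0.
Proof.
move=> /eqP; rewrite sqrtr_eq0 => h i.
have h0 : \sum_i a i ^+ 2 = 0.
  by apply/le_anti; rewrite h /=; apply: sumr_ge0 => j _; exact: sqr_ge0.
have := psumr_eq0P (fun j _ => sqr_ge0 (a j)) h0 (i:=i) isT.
by move/eqP; rewrite sqrf_eq0 => /eqP.
Qed.

Lemma cs n (a b : 'I_n -> R) : (forall i, 0 <= a i) -> (forall i, 0 <= b i) ->
  \sum_i a i * b i <= nr a * nr b.
Proof.
move=> a0 b0.
have A0 : 0 <= nr a by exact: sqrtr_ge0.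
have B0 : 0 <= nr b by exact: sqrtr_ge0.
have [Ae|Ap] := eqVneq (nr a) 0.
  rewrite Ae mul0r big1 // => i _; by rewrite (sum0_sq Ae) mul0r.
have [Be|Bp] := eqVneq (nr b) 0.
  rewrite Be mulr0 big1 // => i _; by rewrite (sum0_sq Be) mulr0.
have AB : 0 < nr a * nr b by rewrite mulr_gt0 // lt0r ?Ap ?Bp.
rewrite -(ler_pM2r AB).
have sa : \sum_i a i ^+ 2 = nr a ^+ 2.
  by rewrite /nr sqr_sqrtr //; apply: sumr_ge0 => j _; exact: sqr_ge0.
have sb : \sum_i b i ^+ 2 = nr b ^+ 2.
  by rewrite /nr sqr_sqrtr //; apply: sumr_ge0 => j _; exact: sqr_ge0.
set A := nr a in A0 Ap AB sa *; set B := nr b in B0 Bp AB sb *.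
have key : \sum_i (2 * (a i * b i) * (A * B)) <= \sum_i (a i ^+ 2 * B ^+ 2 + b i ^+ 2 * A ^+ 2).
  apply: ler_sum => i _.
  have := sqr_ge0 (a i * B - b i * A); nra.
move: key; rewrite big_split /= -!mulr_suml sa sb -mulr_sumr.
move=> key; nra.
Qed.

Lemma mink n (a b : 'I_n -> R) : (forall i, 0 <= a i) -> (forall i, 0 <= b i) ->
  nr (fun i => a i + b i) <= nr a + nr b.
Proof.
move=> a0 b0.
have A0 : 0 <= nr a by exact: sqrtr_ge0.
have B0 : 0 <= nr b by exact: sqrtr_ge0.
apply: (@le_trans _ _ (Num.sqrt ((nr a + nr b) ^+ 2))); last first.
  by rewrite sqrtr_sqr ger0_norm // addr_ge0.
rewrite {1}/nr ler_sqrt; last exact: sqr_ge0.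
have sa : \sum_i a i ^+ 2 = nr a ^+ 2.
  by rewrite /nr sqr_sqrtr //; apply: sumr_ge0 => j _; exact: sqr_ge0.
have sb : \sum_i b i ^+ 2 = nr b ^+ 2.
  by rewrite /nr sqr_sqrtr //; apply: sumr_ge0 => j _; exact: sqr_ge0.
have := cs a0 b0.
have -> : \sum_i (a i + b i) ^+ 2 = \sum_i a i ^+ 2 + \sum_i b i ^+ 2 + 2 * \sum_i a i * b i.
  rewrite mulr_sumr -!big_split /=; apply: eq_bigr => i _; rewrite sqrrD; ring.
rewrite sa sb; nra.
Qed.
End Real.

Lemma split_set n (T : {set 'I_n}) k : (#|T| <= 2 * k)%N ->
  exists T1 : {set 'I_n}, [/\ T1 \subset T, (#|T1| <= k)%N & (#|T :\: T1| <= k)%N].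
Proof.
move=> hT; set s := take k (enum T).
have us : uniq s by apply: take_uniq; exact: enum_uniq.
have cs : #|[set x in s]| = size s by rewrite cardsE; apply/card_uniqP.
have sub : [set x in s] \subset T.
  by apply/fintype.subsetP => x; rewrite inE => /mem_take; rewrite mem_enum.
exists [set x in s]; split => //.
  by rewrite cs size_take -cardE; case: ifP => h; lia.
rewrite cardsD (finset.setIidPr sub) cs size_take -cardE.
case: ifP => h; lia.
Qed.

Section Gen.
Variables (R : realType) (F : pzRingType) (md : F -> R).
Hypotheses (md0 : md 0 = 0) (md1 : md 1 = 1) (mdN : forall a, md (- a) = md a)
  (mdM : forall a b, md (a * b) = md a * md b)
  (mdD : forall a b, md (a + b) <= md a + md b) (md_ge0 : forall a, 0 <= md a).

Lemma norm2_ge0 n (x : 'cV[F]_n) : 0 <= norm2 md x.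
Proof. exact: sqrtr_ge0. Qed.

Lemma norm2_le n (x y : 'cV[F]_n) : (forall i, md (x i 0) <= md (y i 0)) ->
  norm2 md x <= norm2 md y.
Proof. move=> h; apply: (@nr_le R n (fun i => md (x i 0))) => //. Qed.

Lemma norm2_eq n (x y : 'cV[F]_n) : (forall i, md (x i 0) = md (y i 0)) ->
  norm2 md x = norm2 md y.
Proof. by move=> h; apply/le_anti; rewrite !norm2_le // => i; rewrite h. Qed.

Lemma norm2_tri n (x y : 'cV[F]_n) : norm2 md (x - y) <= norm2 md x + norm2 md y.
Proof.
apply: le_trans (mink (fun i => md_ge0 (x i 0)) (fun i => md_ge0 (y i 0))).
apply: (@nr_le R n (fun i => md ((x - y) i 0))) => // i.
by rewrite !mxE -(mdN (y i 0)).
Qed.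

Lemma norm2_0 n : norm2 md (0 : 'cV[F]_n) = 0.
Proof.
rewrite /norm2 big1 ?sqrtr0 // => i _; by rewrite mxE md0 expr0n.
Qed.

Lemma dist_le n (x y : 'cV[F]_n) c : md c = 1 -> dist md x y <= norm2 md (x - c *: y).
Proof.
move=> hc; apply: ge_inf; last by exists c.
by exists 0 => _ [c' _ <-]; exact: norm2_ge0.
Qed.

Lemma dist_ge0 n (x y : 'cV[F]_n) : 0 <= dist md x y.
Proof.
apply: lb_le_inf; first by exists (norm2 md (x - 1 *: y)), 1.
by move=> _ [c' _ <-]; exact: norm2_ge0.
Qed.

Lemma dist_approx n (x y : 'cV[F]_n) e : 0 < e ->
  exists c, md c = 1 /\ norm2 md (x - c *: y) < dist md x y + e.
Proof.
move=> e0.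
have ne : ([set norm2 md (x - c *: y) | c in [set c : F | md c = 1]]%classic !=set0)%classic.
  by exists (norm2 md (x - 1 *: y)), 1.
have lt0 : dist md x y < dist md x y + e by rewrite ltrDl.
have [_ [c hc <-] lt] := inf_lt ne lt0.
by exists c.
Qed.

Lemma sigma_le n s (x z : 'cV[F]_n) : (norm0 z <= s)%N -> sigma md s x <= dist md x z.
Proof.
move=> hz; apply: ge_inf; last by exists z.
by exists 0 => _ [z' _ <-]; exact: dist_ge0.
Qed.

Lemma norm0_restr n (T : {set 'I_n}) (x : 'cV[F]_n) : (norm0 (restr T x) <= #|T|)%N.
Proof.
rewrite /norm0; apply: subset_leq_card; apply/fintype.subsetP => i; rewrite inE mxE.
by case: (i \in T) => //; rewrite eqxx.
Qed.

Lemma norm0_opp n (x : 'cV[F]_n) : norm0 (- x) = norm0 x.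
Proof.
by apply: eq_card => i; rewrite !inE mxE oppr_eq0.
Qed.

Lemma core m n (A : 'M[F]_(m, n)) k (Delta : 'cV[R]_m -> 'cV[F]_n) c0 : 0 < c0 ->
  (forall x, dist md (Delta (absv md (A *m x))) x <= c0 * sigma md k x) ->
  forall eta, A *m eta = 0 ->
  forall T T1 : {set 'I_n}, T1 \subset T -> (#|T1| <= k)%N -> (#|T :\: T1| <= k)%N ->
  norm2 md eta <= c0 * norm2 md (restr (~: T) eta).
Proof.
move=> c0p hD eta hA T T1 sT1 c1 c2.
set u := restr T1 eta; set x' := u - eta; set v := restr (T :\: T1) eta.
set w := restr (~: T) eta.
set D := Delta (absv md (A *m u)).
have hu : dist md D u <= 0.
  apply: le_trans (hD u) _; rewrite pmulr_rle0 //.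
  apply: le_trans (sigma_le _ (z := u) _) _; first exact: leq_trans (norm0_restr _ _) c1.
  by apply: le_trans (dist_le _ _ md1) _; rewrite scale1r subrr norm2_0.
have hx : dist md D x' <= c0 * norm2 md w.
  have -> : D = Delta (absv md (A *m x')) by rewrite /x' mulmxBr hA subr0.
  apply: le_trans (hD x') _; rewrite ler_pM2l //.
  apply: le_trans (sigma_le _ (z := - v) _) _.
    by rewrite norm0_opp; exact: leq_trans (norm0_restr _ _) c2.
  apply: le_trans (dist_le _ _ md1) _; rewrite scale1r.
  suff -> : norm2 md (x' - - v) = norm2 md w by [].
  apply: norm2_eq => i; rewrite !mxE !inE.
  case: (boolP (i \in T1)) => /= i1.
    by rewrite (fintype.subsetP sT1 _ i1) /= subrr opprK add0r ?md0.
  case: (i \in T) => /=; first by rewrite opprK sub0r addNr md0.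
  by rewrite sub0r oppr0 ?addr0 ?subr0 ?add0r mdN.
apply/(@ler_addgt0Pr R) => e e0.
have e2 : 0 < e / 2 by rewrite divr_gt0.
have [a1 [ha1 h1]] := dist_approx D u e2.
have [a2 [ha2 h2]] := dist_approx D x' e2.
have := norm2_tri (D - a1 *: u) (D - a2 *: x').
have -> : norm2 md ((D - a1 *: u) - (D - a2 *: x')) = norm2 md eta.
  apply: norm2_eq => i; rewrite !mxE.
  case: (i \in T1).
    by rewrite subrr mulr0 subr0 addrAC subrr add0r mdN mdM ha1 mul1r.
  by rewrite mulr0 subr0 subKr sub0r mdM ha2 mul1r mdN.
lra.
Qed.


Lemma mainGen m n (A : 'M[F]_(m, n)) k (Delta : 'cV[R]_m -> 'cV[F]_n) c0 : 0 < c0 ->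
  (forall x, dist md (Delta (absv md (A *m x))) x <= c0 * sigma md k x) ->
  forall eta, A *m eta = 0 ->
  forall T : {set 'I_n}, (#|T| <= 2 * k)%N ->
  norm2 md eta <= c0 * sigma md (2 * k) eta /\ c0 * sigma md (2 * k) eta <= c0 * norm2 md (restr (~: T) eta).
Proof.
move=> c0p hD eta hA.
have cr : forall T : {set 'I_n}, (#|T| <= 2 * k)%N ->
    norm2 md eta <= c0 * norm2 md (restr (~: T) eta).
  move=> T hT; have [T1 [s1 k1 k2]] := split_set hT.
  exact: (core c0p hD hA s1 k1 k2).
move=> T hT; split; last first.
  rewrite ler_pM2l //; apply: le_trans (sigma_le _ (z := restr T eta) _) _.
    exact: leq_trans (norm0_restr _ _) hT.
  apply: le_trans (dist_le _ _ md1) _; rewrite scale1r.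
  suff -> : norm2 md (eta - restr T eta) = norm2 md (restr (~: T) eta) by [].
  apply: norm2_eq => i; rewrite !mxE !inE.
  by case: (i \in T) => /=; rewrite ?subrr ?subr0.
rewrite -ler_pdivrMl //.
apply: lb_le_inf.
  exists (dist md eta (restr finset.set0 eta)), (restr finset.set0 eta) => //.
  by apply: leq_trans (norm0_restr _ _) _; rewrite cards0.
move=> _ [z hz <-]; apply: lb_le_inf; first by exists (norm2 md (eta - 1 *: z)), 1.
move=> _ [c hc <-].
set T2 := [set i | (c *: z) i 0 != 0].
have hT' : (#|T2| <= 2 * k)%N.
  apply: leq_trans hz; rewrite /norm0; apply: subset_leq_card.
  apply/fintype.subsetP => i; rewrite !inE mxE; apply: contra => /eqP ->.
  by rewrite mulr0.
rewrite ler_pdivrMl //; apply: le_trans (cr _ hT') _; rewrite ler_pM2l //.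
apply: norm2_le => i; rewrite !mxE !inE mxE.
case: eqP => [->|_] /=; first by rewrite subr0.
by rewrite md0.
Qed.

End Gen.

Theorem mainTheorem6 (R : realType) :
  (forall (m n : nat) (A : 'M[R]_(m, n)) (k : nat),
     (1 <= k <= n)%N ->
     forall (Delta : 'cV[R]_m -> 'cV[R]_n) (c0 : R), 0 < c0 ->
     (forall x : 'cV[R]_n,
        dist (fun c : R => `|c|) (Delta (absv (fun c : R => `|c|) (A *m x))) x
        <= c0 * sigma (fun c : R => `|c|) k x) ->
     forall eta : 'cV[R]_n, A *m eta = 0 ->
     forall T : {set 'I_n}, (#|T| <= 2 * k)%N ->
       norm2 (fun c : R => `|c|) eta <= c0 * sigma (fun c : R => `|c|) (2 * k) eta /\
       c0 * sigma (fun c : R => `|c|) (2 * k) eta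
         <= c0 * norm2 (fun c : R => `|c|) (restr (~: T) eta))
  /\
  (forall (m n : nat) (A : 'M[R[i]]_(m, n)) (k : nat),
     (1 <= k <= n)%N ->
     forall (Delta : 'cV[R]_m -> 'cV[R[i]]_n) (c0 : R), 0 < c0 ->
     (forall x : 'cV[R[i]]_n,
        dist (@ComplexField.Normc.normc R) (Delta (absv (@ComplexField.Normc.normc R) (A *m x))) x
        <= c0 * sigma (@ComplexField.Normc.normc R) k x) ->
     forall eta : 'cV[R[i]]_n, A *m eta = 0 ->
     forall T : {set 'I_n}, (#|T| <= 2 * k)%N ->
       norm2 (@ComplexField.Normc.normc R) eta <= c0 * sigma (@ComplexField.Normc.normc R) (2 * k) eta /\
       c0 * sigma (@ComplexField.Normc.normc R) (2 * k) eta
         <= c0 * norm2 (@ComplexField.Normc.normc R) (restr (~: T) eta)).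
Proof.
split.
  move=> m n A k _ Delta c0 c0p hD eta hA T hT.
  apply: (mainGen (md := fun c : R => `|c|)) => //.
  - exact: normr0.
  - exact: normr1.
  - exact: normrN.
  - exact: normrM.
  - exact: ler_normD.
move=> m n A k _ Delta c0 c0p hD eta hA T hT.
apply: (mainGen (md := @ComplexField.Normc.normc R)) => //.
- exact: ComplexField.Normc.normc0.
- exact: ComplexField.Normc.normc1.
- exact: normcN.
- exact: ComplexField.Normc.normcM.
- exact: le_normcD.
- by case=> a b; exact: sqrtr_ge0.
Qed.
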